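(* Let $A$ be an infinite set and let $I$ be a set. Let $\mathcal{B}\subseteq\Omega(A)^{I}$ be a subalgebra of the direct power $\Omega(A)^{I}$. Then there is a filter $F$ on the partition lattice $\Pi(I)$ such that for every $f\in A^{I}$, we have $f\in\mathcal{B}$ if and only if $\Pi(f)\in F$.
   Context: For each $a\in A$ let $\hat{a}$ be a constant symbol, and for each $n\geq1$ and each function $f:A^{n}\to A$ let $\hat{f}$ be an $n$-ary operation symbol. $\Omega(A)$ is the algebra with universe $A$ in this signature in which $\hat{a}$ is interpreted as $a$ and $\hat{f}$ is interpreted as $f$ (so every element is a fundamental constant and every finitary function on $A$ is a fundamental operation). $\Pi(I)$ is the lattice of partitions of $I$ (partitions have nonempty blocks), ordered so that $P\preceq Q$ means $P$ refines $Q$; $P\wedge Q$ is the common refinement. For a function $f:I\to X$, $\Pi(f)=\{f^{-1}(\{x\}) : x\in X\}\setminus\{\emptyset\}$ is the partition of $I$ into the nonempty fibers of $f$. *)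

(* Defs.v *)
From mathcomp Require Import all_boot.
From mathcomp Require Import boolp classical_sets cardinality.
Set Implicit Arguments. Unset Strict Implicit. Unset Printing Implicit Defensive.
Local Open Scope classical_set_scope.

(* A subalgebra of the direct power Omega(A)^I: a set of functions I -> A
   closed under every fundamental operation of Omega(A), applied coordinatewise:
   every constant a (the constant function), and every n-ary f : A^n -> A,
   n >= 1 (A^n rendered as 'I_n -> A). *)
Definition Omega_power_subalgebra (A I : Type) (B : set (I -> A)) : Prop :=
  (forall a : A, B (fun _ => a)) /\
  (forall (n : nat) (f : ('I_n -> A) -> A) (bs : 'I_n -> (I -> A)),
      (0 < n)%N -> (forall k, B (bs k)) -> B (fun i => f (fun k => bs k i))).

Definition is_partition (I : Type) (P : set (set I)) : Prop :=
  (forall S, P S -> S !=set0) /\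
  (forall S T, P S -> P T -> S `&` T !=set0 -> S = T) /\
  (forall i : I, exists S, P S /\ S i).

Definition refines (I : Type) (P Q : set (set I)) : Prop :=
  forall S, P S -> exists T, Q T /\ S `<=` T.

Definition pmeet (I : Type) (P Q : set (set I)) : set (set I) :=
  [set S | S !=set0 /\ exists U V, P U /\ Q V /\ S = U `&` V].

Definition partition_filter (I : Type) (F : set (set (set I))) : Prop :=
  (forall P, F P -> is_partition P) /\
  (exists P, F P) /\
  (forall P Q, F P -> is_partition Q -> refines P Q -> F Q) /\
  (forall P Q, F P -> F Q -> F (pmeet P Q)).

Definition Pi_of (I X : Type) (f : I -> X) : set (set I) :=
  [set S | S !=set0 /\ exists x, S = f @^-1` [set x]].

(* Main.v *)
Require Import Defs.
From mathcomp Require Import all_boot.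
From mathcomp Require Import boolp classical_sets cardinality.
Local Open Scope classical_set_scope.

Lemma Pi_part (I X : Type) (f : I -> X) : is_partition (Pi_of f).
Proof.
split; [by move=> S []|split].
- move=> S T [_ [x ->]] [_ [y ->]] [i [/= Hx Hy]].
  by rewrite -Hx -Hy.
- move=> i; exists (f @^-1` [set f i]); split=> //; split=> //; first by exists i.
  by exists (f i).
Qed.

Definition FF (A I : Type) (B : set (I -> A)) (P : set (set I)) : Prop :=
  is_partition P /\ exists n (fs : 'I_n -> I -> A), (0 < n)%N /\
    (forall k, B (fs k)) /\
    (forall i j, (forall k, fs k i = fs k j) -> exists T, P T /\ T i /\ T j).

Arguments FF {A I}.

Theorem mainTheorem1 (A I : Type) (B : set (I -> A)) :
  infinite_set [set: A] ->
  Omega_power_subalgebra B ->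
  exists F : set (set (set I)),
    partition_filter F /\ (forall f : I -> A, B f <-> F (Pi_of f)).
Proof.
move=> Hinf [Bc Bop].
have [a0 _] : exists a : A, True.
  apply: contrapT => Hn; apply: Hinf.
  suff -> : [set: A] = set0 by apply: finite_set0.
  by apply/seteqP; split=> // a _; apply: Hn; exists a.
have Bin : forall f, B f -> FF B (Pi_of f).
  move=> f Bf; split; first exact: Pi_part.
  exists 1%N, (fun _ => f); split=> //; split=> // i j E.
  exists (f @^-1` [set f i]); split; last by split=> //; rewrite /= (E ord0).
  by split; [exists i | exists (f i)].
exists (FF B); split; first split.
- by move=> P [].
split; first by exists (Pi_of (fun _ : I => a0)); apply: Bin.
split.
- move=> P Q [_ [n [fs [n0 [Bfs H]]]]] Qp PQ; split=> //.
  exists n, fs; split=> //; split=> // i j E.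
  have [T [PT [Ti Tj]]] := H i j E.
  have [U [QU TU]] := PQ T PT.
  by exists U; split=> //; split; apply: TU.
- move=> P Q [Pp [n [fs [n0 [Bfs H]]]]] [Qp [m [gs [m0 [Bgs G]]]]].
  split.
  + split; first by move=> S [].
    split.
    * move=> S T [_ [U [V [PU [QV ->]]]]] [_ [U' [V' [PU' [QV' ->]]]]] [i [[Ui Vi] [U'i V'i]]].
      have EU : U = U' by apply: Pp.2.1 => //; exists i.
      have EV : V = V' by apply: Qp.2.1 => //; exists i.
      by rewrite EU EV.
    * move=> i; have [U [PU Ui]] := Pp.2.2 i; have [V [QV Vi]] := Qp.2.2 i.
      exists (U `&` V); split=> //; split; first by exists i.
      by exists U, V.
  + exists (n + m)%N, (fun k => match split k with inl a => fs a | inr b => gs b end).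
    split; first by rewrite addn_gt0 n0.
    split; first by move=> k; case: (split k).
    move=> i j E.
    have [T [PT [Ti Tj]]] : exists T, P T /\ T i /\ T j.
      apply: H => k; have := E (unsplit (inl k)); by rewrite unsplitK.
    have [U [QU [Ui Uj]]] : exists T, Q T /\ T i /\ T j.
      apply: G => k; have := E (unsplit (inr k)); by rewrite unsplitK.
    exists (T `&` U); split; last by [].
    by split; [exists i | exists T, U].
- move=> f; split; first exact: Bin.
  move=> [_ [n [fs [n0 [Bfs H]]]]].
  have hx : forall v : 'I_n -> A, exists a : A,
      forall i, (fun k => fs k i) = v -> f i = a.
    move=> v; case: (pselect (exists i, (fun k => fs k i) = v)).
    + move=> [i Ei]; exists (f i) => j Ej.
      have [T [[_ [x ->]] [/= Ti Tj]]] := H j i (fun k => congr1 (fun w => w k) (etrans Ej (esym Ei))).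
      by rewrite Ti Tj.
    + by move=> Hn; exists a0 => i Ei; exfalso; apply: Hn; exists i.
  have [h Hh] := choice hx.
  have -> : f = (fun i => h (fun k => fs k i)).
    by apply: funext => i; apply: Hh.
  exact: Bop.
Qed.
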